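(* Let $a,b$ be integers with $b>a>2$, and set $r:=\min\{\,b-1,\ (a-1)(\lfloor b/a\rfloor+1)\,\}$. Then for every integer $c\geq \operatorname{lcm}(a,b)-r$ there exists a tame polynomial automorphism $F$ of $\mathbb{C}^3$ with $\operatorname{mdeg}F=(a,b,c)$.
   Context: For a polynomial automorphism $F=(F_1,\ldots,F_n)$ of $\mathbb{C}^n$, its multidegree is $\operatorname{mdeg}F:=(\deg F_1,\ldots,\deg F_n)$, where $\deg$ is total degree. A map $F=(F_1,\ldots,F_n)$ is elementary if for some $j\leq n$ and some polynomial $g$ in $n-1$ variables, $F_j=X_j+g(X_1,\ldots,\widehat{X_j},\ldots,X_n)$ and $F_i=X_i$ for $i\neq j$. A polynomial automorphism is tame if it is a composition of invertible affine-linear maps and elementary maps. *)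

(* Defs.v *)
(* Polynomials in 3 variables are encoded as nested
   univariate polynomials: p : {poly {poly {poly C}}}, where the coefficient
   of X1^i X2^j X3^k is p`_i`_j`_k. *)
From HB Require Import structures.
From mathcomp Require Import all_boot all_order all_algebra.
Set Implicit Arguments. Unset Strict Implicit. Unset Printing Implicit Defensive.
Import Order.TTheory GRing.Theory Num.Theory.
Local Open Scope ring_scope.

Definition P3 (C : comNzRingType) := {poly {poly {poly C}}}.

Definition o0 : 'I_3 := @Ordinal 3 0 isT.
Definition o1 : 'I_3 := @Ordinal 3 1 isT.
Definition o2 : 'I_3 := @Ordinal 3 2 isT.

Definition pconst (C : comNzRingType) (c : C) : P3 C := (c%:P)%:P%:P.

Definition pvar (C : comNzRingType) (i : 'I_3) : P3 C :=
  match val i with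
  | 0%N => 'X
  | 1%N => ('X : {poly {poly C}})%:P
  | _ => (('X : {poly C})%:P)%:P
  end.

Definition peval (C : comNzRingType) (p : P3 C) (g : 'I_3 -> P3 C) : P3 C :=
  \sum_(i < size p) \sum_(j < size p`_i) \sum_(k < size p`_i`_j)
     @pconst C (p`_i`_j`_k) * g o0 ^+ i * g o1 ^+ j * g o2 ^+ k.

(* total degree (0 for the zero polynomial) *)
Definition tdeg (C : comNzRingType) (p : P3 C) : nat :=
  \max_(i < size p) \max_(j < size (p`_i)%R)
     \max_(k < size (p`_i`_j)%R | (p`_i`_j`_k)%R != 0%R) (i + j + k)%N.

Definition polymap (C : comNzRingType) := 'I_3 -> P3 C.

Definition pcomp (C : comNzRingType) (F G : polymap C) : polymap C :=
  fun i => peval (F i) G.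

Definition mdeg (C : comNzRingType) (F : polymap C) : nat * nat * nat :=
  (tdeg (F o0), tdeg (F o1), tdeg (F o2)).

Definition affine_inv (C : fieldType) (F : polymap C) : Prop :=
  exists (A : 'M[C]_3) (b : 'I_3 -> C), A \in unitmx /\
    forall i, F i = \sum_(j < 3) @pconst C (A i j) * @pvar C j + @pconst C (b i).

Definition indep_of (C : comNzRingType) (j : 'I_3) (g : P3 C) : Prop :=
  peval g (fun l => if l == j then 0 else @pvar C l) = g.

Definition elementary (C : comNzRingType) (F : polymap C) : Prop :=
  exists (j : 'I_3) (g : P3 C), indep_of j g /\
    F j = @pvar C j + g /\ forall i, i != j -> F i = @pvar C i.

Inductive tame (C : fieldType) : polymap C -> Prop :=
  | tame_aff F : affine_inv F -> tame F
  | tame_elem F : elementary F -> tame F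
  | tame_comp F G : tame F -> tame G -> tame (pcomp F G).

(* Main.v *)
Require Import Defs.
From HB Require Import structures.
From mathcomp Require Import all_boot all_order all_algebra.
From Stdlib Require Import Lia.
Set Implicit Arguments. Unset Strict Implicit. Unset Printing Implicit Defensive.
Import Order.TTheory GRing.Theory Num.Theory.
Local Open Scope ring_scope.

Ltac nlia := repeat match goal with H : is_true (_ <= _)%N |- _ => move/ssrnat.leP: H => H end;
  try apply/ssrnat.leP; unfold addn, subn, muln, addn_rec, subn_rec, muln_rec in *; lia.

Record goodP (R : comNzRingType) (P : R -> nat -> Prop) : Prop := GoodP {
  gP0 : forall m, P 0 m;
  gPD : forall x y m, P x m -> P y m -> P (x + y) m;
  gPN : forall x m, P x m -> P (- x) m;
  gPM : forall x y m n, P x m -> P y n -> P (x * y) (m + n)%N;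
  gPmono : forall x m n, P x m -> (m <= n)%N -> P x n;
  gP1 : P 1 0%N }.

Definition liftP (R : comNzRingType) (P : R -> nat -> Prop) (p : {poly R}) (n : nat) : Prop :=
  forall i, p`_i != 0 -> (i <= n)%N /\ P p`_i (n - i)%N.

Lemma liftP_good (R : comNzRingType) (P : R -> nat -> Prop) : goodP P -> goodP (liftP P).
Proof.
case=> P0 PD PN PM Pmono P1; split.
- by move=> m i; rewrite coef0 eqxx.
- move=> x y m Hx Hy i; rewrite coefD => nz.
  have [xz|xnz] := eqVneq x`_i 0.
    rewrite xz add0r in nz *; exact: Hy.
  have [Hi Pi] := Hx i xnz; split => //.
  have [yz|ynz] := eqVneq y`_i 0; first by rewrite yz addr0.
  by apply: PD => //; case: (Hy i ynz).
- move=> x m Hx i; rewrite coefN oppr_eq0 => nz.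
  by have [Hi Pi] := Hx i nz; split => //; apply: PN.
- move=> x y m n Hx Hy i; rewrite coefM => nz.
  case: (pickP (fun j : 'I_i.+1 => x`_j * y`_(i - j) != 0)) => [j Hj | H0]; last first.
    by rewrite big1 ?eqxx in nz => // j _; move/negbFE: (H0 j) => /eqP.
  case: j Hj => j ltj /= Hj.
  have xj : x`_j != 0 by apply: contraNneq Hj => ->; rewrite mul0r.
  have yj : y`_(i - j) != 0 by apply: contraNneq Hj => ->; rewrite mulr0.
  have [Hj1 _] := Hx j xj; have [Hj2 _] := Hy _ yj.
  have Hji : (j <= i)%N by rewrite -ltnS.
  split; first by nlia.
  apply: (big_ind (fun z => P z (m + n - i)%N)); [exact: P0 | by move=> ? ? ? ?; apply: PD | ].
  case=> k ltk _ /=.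
  have [xz|xnz] := eqVneq x`_k 0; first by rewrite xz mul0r.
  have [yz|ynz] := eqVneq y`_(i - k) 0; first by rewrite yz mulr0.
  have [Hk1 Pk1] := Hx k xnz; have [Hk2 Pk2] := Hy _ ynz.
  have Hki : (k <= i)%N by rewrite -ltnS.
  apply: Pmono (PM _ _ _ _ Pk1 Pk2) _; nlia.
- move=> x m n Hx Hmn i nz; have [Hi Pi] := Hx i nz; split; first by nlia.
  apply: Pmono Pi _; nlia.
- move=> i; rewrite coef1; case: i => [|i] /=; last by rewrite eqxx.
  by move=> _; split.
Qed.

Lemma liftP_C (R : comNzRingType) (P : R -> nat -> Prop) c n : P c n -> liftP P c%:P n.
Proof. move=> Pc i; rewrite coefC; case: i => [|i] /=; last by rewrite eqxx.
by move=> _; split; rewrite ?subn0. Qed.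

Lemma liftP_X (R : comNzRingType) (P : R -> nat -> Prop) : goodP P -> liftP P 'X 1.
Proof. move=> gP i; rewrite coefX; case: i => [|[|i]] /=; rewrite ?eqxx //.
by move=> _; split => //; exact: gP1. Qed.

Definition Ptriv (C : comNzRingType) (c : C) (n : nat) := True.
Lemma Ptriv_good (C : comNzRingType) : goodP (@Ptriv C).
Proof. by split. Qed.

Definition B1 (C : comNzRingType) := liftP (@Ptriv C).
Definition B2 (C : comNzRingType) := liftP (@B1 C).
Definition B3 (C : comNzRingType) : P3 C -> nat -> Prop := liftP (@B2 C).

Lemma B1_good (C : comNzRingType) : goodP (@B1 C).
Proof. exact: liftP_good (Ptriv_good C). Qed.
Lemma B2_good (C : comNzRingType) : goodP (@B2 C).
Proof. exact: liftP_good (B1_good C). Qed.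
Lemma B3_good (C : comNzRingType) : goodP (@B3 C).
Proof. exact: liftP_good (B2_good C). Qed.

Definition cb (C : comNzRingType) (p : P3 C) (n : nat) :=
  forall i j k, p`_i`_j`_k != 0 -> (i + j + k <= n)%N.

Lemma nz_coef_exists (R : nzRingType) (q : {poly R}) : q != 0 -> q`_(size q).-1 != 0.
Proof. by move=> nq; rewrite -lead_coefE lead_coef_eq0. Qed.

Lemma B3_cb (C : comNzRingType) (p : P3 C) n : B3 p n -> cb p n.
Proof.
move=> H i j k nz.
have pi : p`_i != 0 by apply: contraNneq nz => ->; rewrite !coef0.
have [Hi H2] := H i pi.
have pij : p`_i`_j != 0 by apply: contraNneq nz => ->; rewrite coef0.
have [Hj H1] := H2 j pij.
have [Hk _] := H1 k nz.
nlia.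
Qed.

Lemma cb_B3 (C : comNzRingType) (p : P3 C) n : cb p n -> B3 p n.
Proof.
move=> H i pi.
have pij := nz_coef_exists pi.
have pijk := nz_coef_exists pij.
have := H _ _ _ pijk => Hb.
split; first by nlia.
move=> j pj; have pjk := nz_coef_exists pj.
have := H _ _ _ pjk => Hb2.
split; first by nlia.
move=> k pk; have := H _ _ _ pk => Hb3.
split; first by nlia. done.
Qed.

Lemma cb_add (C : comNzRingType) (p q : P3 C) n : cb p n -> cb q n -> cb (p + q) n.
Proof. move=> /cb_B3 Hp /cb_B3 Hq; apply: B3_cb; exact: gPD (B3_good C) _ _ _ Hp Hq. Qed.
Lemma cb_opp (C : comNzRingType) (p : P3 C) n : cb p n -> cb (- p) n.
Proof. move=> /cb_B3 Hp; apply: B3_cb; exact: gPN (B3_good C) _ _ Hp. Qed.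
Lemma cb_sub (C : comNzRingType) (p q : P3 C) n : cb p n -> cb q n -> cb (p - q) n.
Proof. by move=> Hp Hq; apply: cb_add => //; apply: cb_opp. Qed.
Lemma cb_mul (C : comNzRingType) (p q : P3 C) n m : cb p n -> cb q m -> cb (p * q) (n + m).
Proof. move=> /cb_B3 Hp /cb_B3 Hq; apply: B3_cb; exact: gPM (B3_good C) _ _ _ _ Hp Hq. Qed.
Lemma cb_mono (C : comNzRingType) (p : P3 C) n m : cb p n -> (n <= m)%N -> cb p m.
Proof. by move=> H le i j k nz; apply: leq_trans (H _ _ _ nz) le. Qed.
Lemma cb0 (C : comNzRingType) n : cb (0 : P3 C) n.
Proof. by move=> i j k; rewrite !coef0 eqxx. Qed.
Lemma cb1 (C : comNzRingType) : cb (1 : P3 C) 0.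
Proof. apply: B3_cb; exact: gP1 (B3_good C). Qed.
Lemma cb_exp (C : comNzRingType) (p : P3 C) n e : cb p n -> cb (p ^+ e) (n * e).
Proof.
move=> H; elim: e => [|e IH]; first by rewrite expr0 muln0; apply: cb1.
by rewrite exprS mulnS; apply: cb_mul.
Qed.
Lemma cb_sum (C : comNzRingType) (I : finType) (F : I -> P3 C) n :
  (forall i, cb (F i) n) -> cb (\sum_i F i) n.
Proof.
move=> H; apply: (big_ind (fun z => cb z n)); [exact: cb0 | by move=> ? ? ? ?; apply: cb_add | by move=> i _].
Qed.
Lemma cb_const (C : comNzRingType) (c : C) : cb (pconst c) 0.
Proof.
apply: B3_cb; apply: liftP_C; apply: liftP_C; apply: liftP_C; done.
Qed.
Lemma cb_X1 (C : comNzRingType) : cb (pvar C o0) 1.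
Proof. apply: B3_cb; apply: liftP_X; exact: B2_good. Qed.
Lemma cb_X2 (C : comNzRingType) : cb (pvar C o1) 1.
Proof. apply: B3_cb; apply: liftP_C; apply: liftP_X; exact: B1_good. Qed.
Lemma cb_X3 (C : comNzRingType) : cb (pvar C o2) 1.
Proof. apply: B3_cb; apply: liftP_C; apply: liftP_C; apply: liftP_X; exact: Ptriv_good. Qed.

Lemma tdeg_le (C : comNzRingType) (p : P3 C) n : cb p n -> (tdeg p <= n)%N.
Proof.
move=> H; apply/bigmax_leqP => i _; apply/bigmax_leqP => j _; apply/bigmax_leqP => k nz.
exact: H.
Qed.

Lemma size_of_nz (R : nzRingType) (q : {poly R}) i : q`_i != 0 -> (i < size q)%N.
Proof. by move=> nz; rewrite ltnNge; apply: contra nz => le; rewrite nth_default. Qed.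

Lemma tdeg_ge (C : comNzRingType) (p : P3 C) i j k : p`_i`_j`_k != 0 -> (i + j + k <= tdeg p)%N.
Proof.
move=> nz.
have pij : p`_i`_j != 0 by apply: contraNneq nz => ->; rewrite coef0.
have pi : p`_i != 0 by apply: contraNneq pij => ->; rewrite coef0.
have ki := size_of_nz nz; have ji := size_of_nz pij; have ii := size_of_nz pi.
rewrite /tdeg.
apply: leq_trans (leq_bigmax (Ordinal ii)) => /=.
apply: leq_trans (leq_bigmax (Ordinal ji)) => /=.
exact: (@leq_bigmax_cond _ (fun k : 'I_(size p`_i`_j) => p`_i`_j`_k != 0) (fun k : 'I_(size p`_i`_j) => (i + j + k)%N) (Ordinal ki) nz).
Qed.

Lemma tdeg_eq (C : comNzRingType) (p : P3 C) n i j k :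
  cb p n -> p`_i`_j`_k != 0 -> (i + j + k)%N = n -> tdeg p = n.
Proof.
move=> H nz e; apply/eqP; rewrite eqn_leq tdeg_le //= -e; exact: tdeg_ge.
Qed.

Definition mono (C : comNzRingType) (i j k : nat) : P3 C :=
  pvar C o0 ^+ i * pvar C o1 ^+ j * pvar C o2 ^+ k.

Lemma mono_form (C : comNzRingType) (c : C) i j k :
  pconst c * mono C i j k = ((((c%:P * 'X^k)%:P * 'X^j)%:P) * 'X^i).
Proof.
rewrite /pconst /mono /pvar /= !rmorphM /= !rmorphXn /=.
rewrite -!mulrA; congr (_ * _); by rewrite [_ * 'X^i]mulrC mulrA [RHS]mulrC.
Qed.

Lemma coef_mono (C : comNzRingType) (c : C) i j k i' j' k' :
  (pconst c * mono C i j k)`_i'`_j'`_k' =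
  if [&& i' == i, j' == j & k' == k] then c else 0.
Proof.
rewrite mono_form coefMXn.
case: (ltnP i' i) => [lt|le].
  by rewrite (ltn_eqF lt) /= !coef0.
rewrite coefC.
case: (eqVneq i' i) => [->|ne] /=.
  rewrite subnn eqxx coefMXn.
  case: (ltnP j' j) => [lt|le2].
    by rewrite (ltn_eqF lt) /= coef0.
  rewrite coefC.
  case: (eqVneq j' j) => [->|ne2] /=.
    rewrite subnn eqxx coefMXn.
    case: (ltnP k' k) => [lt|le3].
      by rewrite (ltn_eqF lt) /=.
    rewrite coefC.
    case: (eqVneq k' k) => [->|ne3] /=; first by rewrite subnn eqxx.
    have : (k' - k != 0)%N by rewrite subn_eq0 -ltnNge ltn_neqAle eq_sym ne3.
    by move/negbTE => ->.
  have : (j' - j != 0)%N by rewrite subn_eq0 -ltnNge ltn_neqAle eq_sym ne2.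
  by move/negbTE => ->; rewrite coef0.
have : (i' - i != 0)%N by rewrite subn_eq0 -ltnNge ltn_neqAle eq_sym ne.
by move/negbTE => ->; rewrite !coef0.
Qed.

Lemma cb_mono_t (C : comNzRingType) (c : C) i j k : cb (pconst c * mono C i j k) (i + j + k).
Proof.
have -> : (i + j + k = 0 + (1 * i + 1 * j + 1 * k))%N by rewrite !mul1n.
apply: cb_mul; first exact: cb_const.
rewrite /mono; apply: cb_mul; first apply: cb_mul.
- apply: cb_exp; exact: cb_X1.
- apply: cb_exp; exact: cb_X2.
- apply: cb_exp; exact: cb_X3.
Qed.

Lemma monoM (C : comNzRingType) i j k i' j' k' :
  mono C i j k * mono C i' j' k' = mono C (i + i') (j + j') (k + k').
Proof. by rewrite /mono !exprD mulrACA [X in X * _]mulrACA. Qed.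

Lemma pconstM (C : comNzRingType) (c d : C) : pconst c * pconst d = pconst (c * d).
Proof. by rewrite /pconst !rmorphM. Qed.
Lemma pconstD (C : comNzRingType) (c d : C) : pconst c + pconst d = pconst (c + d).
Proof. by rewrite /pconst !rmorphD. Qed.
Lemma pconst1 (C : comNzRingType) : pconst (1 : C) = 1.
Proof. by rewrite /pconst !rmorph1. Qed.

Definition LM (C : comNzRingType) (p : P3 C) (c : C) (i j k : nat) :=
  exists q, p = pconst c * mono C i j k + q /\ cb q (i + j + k).-1.

Lemma LM_coef (C : comNzRingType) (p : P3 C) c i j k :
  LM p c i j k -> (0 < i + j + k)%N -> p`_i`_j`_k = c.
Proof.
case=> q [-> Hq] pos; rewrite !coefD coef_mono !eqxx /=.
have : q`_i`_j`_k == 0.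
  apply/negPn/negP => nz; have := Hq _ _ _ nz; rewrite leqNgt.
  by case: (i + j + k)%N pos => // n _; rewrite ltnSn.
by move/eqP => ->; rewrite addr0.
Qed.

Lemma LM_cb (C : comNzRingType) (p : P3 C) c i j k : LM p c i j k -> cb p (i + j + k).
Proof.
case=> q [-> Hq]; apply: cb_add; first exact: cb_mono_t.
by apply: cb_mono Hq _; apply: leq_pred.
Qed.

Lemma LM_add (C : comNzRingType) (p p' : P3 C) c c' i j k :
  LM p c i j k -> LM p' c' i j k -> LM (p + p') (c + c') i j k.
Proof.
case=> q [-> Hq] [q' [-> Hq']]; exists (q + q'); split; last exact: cb_add.
by rewrite -pconstD mulrDl addrACA.
Qed.

Lemma LM_low (C : comNzRingType) (p r : P3 C) c i j k :
  LM p c i j k -> cb r (i + j + k).-1 -> LM (p + r) c i j k.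
Proof.
case=> q [-> Hq] Hr; exists (q + r); split; last exact: cb_add.
by rewrite addrA.
Qed.

Lemma LM_mul (C : comNzRingType) (p p' : P3 C) c c' i j k i' j' k' :
  LM p c i j k -> LM p' c' i' j' k' -> (0 < i + j + k)%N -> (0 < i' + j' + k')%N ->
  LM (p * p') (c * c') (i + i') (j + j') (k + k').
Proof.
case=> q [-> Hq] [q' [-> Hq']] pos pos'.
exists (pconst c * mono C i j k * q' + q * (pconst c' * mono C i' j' k') + q * q'); split.
  rewrite mulrDr !mulrDl -!addrA; congr (_ + _); first by rewrite mulrACA pconstM monoM.
  exact: addrCA.
have E : ((i + i') + (j + j') + (k + k')).-1 = (i + j + k + (i' + j' + k').-1)%N.
  by rewrite -!subn1; nlia.
have E2 : ((i + i') + (j + j') + (k + k')).-1 = ((i + j + k).-1 + (i' + j' + k'))%N.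
  by rewrite -!subn1; nlia.
apply: cb_add; first apply: cb_add.
- rewrite E; apply: cb_mul => //; exact: cb_mono_t.
- rewrite E2; apply: cb_mul => //; exact: cb_mono_t.
- apply: cb_mono; first exact: cb_mul Hq Hq'.
  rewrite -!subn1; nlia.
Qed.

Lemma LM_mulpow (C : comNzRingType) (f : P3 C) d i j k e :
  LM f d i j k -> (0 < i + j + k)%N ->
  forall (p : P3 C) c I J K, LM p c I J K -> (0 < I + J + K)%N ->
  LM (p * f ^+ e) (c * d ^+ e) (I + i * e) (J + j * e) (K + k * e).
Proof.
move=> Hf posf; elim: e => [|e IH] p c I J K Hp pos.
  by rewrite !expr0 !mulr1 !muln0 !addn0.
rewrite exprS mulrA [d ^+ _.+1]exprS mulrA.
have -> : (I + i * e.+1 = (I + i) + i * e)%N by rewrite mulnS; nlia.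
have -> : (J + j * e.+1 = (J + j) + j * e)%N by rewrite mulnS; nlia.
have -> : (K + k * e.+1 = (K + k) + k * e)%N by rewrite mulnS; nlia.
apply: IH; first exact: LM_mul.
nlia.
Qed.

Notation ev1 z := (horner_eval z \o map_poly (polyC \o polyC \o polyC)).
Notation ev2 y z := (horner_eval y \o map_poly (ev1 z)).
Notation ev g := (horner_eval (g o0) \o map_poly (ev2 (g o1) (g o2))).

Lemma size_map_le (R S : nzRingType) (f : R -> S) (p : {poly R}) : (size (map_poly f p) <= size p)%N.
Proof. exact: size_poly. Qed.

Lemma ev_horner (R : nzRingType) (C : comNzRingType) (x : P3 C) (f : R -> P3 C) (p : {poly R}) :
  f 0 = 0 ->
  (horner_eval x \o map_poly f) p = \sum_(i < size p) f p`_i * x ^+ i.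
Proof.
move=> f0; rewrite /= /horner_eval (horner_coef_wide _ (size_map_le f p)).
by apply: eq_bigr => i _; rewrite coef_map_id0.
Qed.

Lemma ev1_0 (C : comNzRingType) (z : P3 C) : ev1 z 0 = 0.
Proof. by rewrite /= /horner_eval map_poly0 horner0. Qed.
Lemma ev2_0 (C : comNzRingType) (y z : P3 C) : ev2 y z 0 = 0.
Proof. by rewrite /= /horner_eval map_poly0 horner0. Qed.

Lemma peval_ev (C : comNzRingType) (p : P3 C) g : peval p g = ev g p.
Proof.
rewrite /peval ev_horner; last exact: ev2_0.
apply: eq_bigr => i _.
rewrite ev_horner; last exact: ev1_0.
rewrite mulr_suml; apply: eq_bigr => j _.
rewrite ev_horner; last by rewrite rmorph0.
rewrite !mulr_suml; apply: eq_bigr => k _.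
rewrite /pconst /=.
rewrite -!mulrA; congr (_ * _).
by rewrite [_ * g o0 ^+ i]mulrC mulrA [RHS]mulrC.
Qed.

Lemma ev_add (C : comNzRingType) g (p q : P3 C) : ev g (p + q) = ev g p + ev g q.
Proof. by rewrite rmorphD. Qed.
Lemma ev_sub (C : comNzRingType) g (p q : P3 C) : ev g (p - q) = ev g p - ev g q.
Proof. by rewrite rmorphB. Qed.
Lemma ev_mul (C : comNzRingType) g (p q : P3 C) : ev g (p * q) = ev g p * ev g q.
Proof. by rewrite rmorphM. Qed.
Lemma ev_exp (C : comNzRingType) g (p : P3 C) n : ev g (p ^+ n) = ev g p ^+ n.
Proof. by rewrite rmorphXn. Qed.
Lemma ev_sum (C : comNzRingType) g (I : finType) (F : I -> P3 C) : ev g (\sum_i F i) = \sum_i ev g (F i).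
Proof. by rewrite rmorph_sum. Qed.
Lemma ev_const (C : comNzRingType) g (c : C) : ev g (pconst c) = pconst c.
Proof.
rewrite /pconst /= map_polyC /= horner_evalE hornerC /= map_polyC /= horner_evalE hornerC.
by rewrite /= map_polyC /= horner_evalE hornerC.
Qed.
Lemma ev_X1 (C : comNzRingType) g : ev g (pvar C o0) = g o0.
Proof. by rewrite /pvar /= map_polyX /= horner_evalE hornerX. Qed.
Lemma ev_X2 (C : comNzRingType) g : ev g (pvar C o1) = g o1.
Proof.
by rewrite /pvar /= map_polyC /= horner_evalE hornerC /= map_polyX /= horner_evalE hornerX.
Qed.
Lemma ev_X3 (C : comNzRingType) g : ev g (pvar C o2) = g o2.
Proof.
rewrite /pvar /= map_polyC /= horner_evalE hornerC /= map_polyC /= horner_evalE hornerC.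
by rewrite /= map_polyX /= horner_evalE hornerX.
Qed.

Lemma coef0_exp (R : comNzRingType) (p : {poly R}) k : (p ^+ k)`_0 = p`_0 ^+ k.
Proof.
elim: k => [|k IH]; first by rewrite !expr0 coef1.
by rewrite !exprS coef0M IH.
Qed.

Lemma hensel (C : fieldType) (n : nat) (P : {poly C}) (N : nat) :
  (n%:R : C) != 0 -> P`_0 = 1 ->
  exists S : {poly C}, [/\ (size S <= N.+1)%N, S`_0 = 1 &
     forall i, (i <= N)%N -> (P - S ^+ n)`_i = 0].
Proof.
move=> nz P0; elim: N => [|N [S [szS S0 HS]]].
  exists 1; split; first by rewrite size_poly1.
  - by rewrite coef1.
  - by move=> i; rewrite leqn0 => /eqP ->; rewrite expr1n coefB coef1 P0 subrr.
set c := (P - S ^+ n)`_N.+1 / n%:R.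
set S' := S + c%:P * 'X^(N.+1).
set G := \sum_(j < n) S' ^+ (n.-1 - j) * S ^+ j.
have S'0 : S'`_0 = 1 by rewrite /S' coefD coefCM coefXn /= mulr0 addr0.
have G0 : G`_0 = n%:R.
  rewrite /G coef_sum (eq_bigr (fun _ => 1)).
    by rewrite sumr_const card_ord.
  by move=> j _; rewrite coef0M !coef0_exp S'0 S0 !expr1n mulr1.
have E : S' ^+ n = S ^+ n + 'X^(N.+1) * (c%:P * G).
  have H := subrXX S' S n; rewrite -/G in H.
  have D : S' - S = c%:P * 'X^(N.+1) by rewrite /S' addrAC subrr add0r.
  rewrite D in H.
  rewrite -(subrK (S ^+ n) (S' ^+ n)) H addrC; congr (_ + _).
  by rewrite mulrAC mulrC.
exists S'; split.
- rewrite /S' (leq_trans (size_polyD _ _)) // geq_max (leq_trans szS) //.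
  by rewrite mul_polyC (leq_trans (size_scale_leq _ _)) // size_polyXn.
- exact: S'0.
- move=> i le; rewrite E opprD addrA coefB coefXnM.
  case: (ltnP i N.+1) => [lt|ge].
    by rewrite HS ?subr0 // -ltnS.
  have -> : i = N.+1 by apply/eqP; rewrite eqn_leq le ge.
  rewrite subnn coefCM G0 /c divfK // subrr //.
Qed.

Definition sig (C : comNzRingType) (a : nat) (w : P3 C) : P3 C :=
  w \Po ('X * ((('X : {poly C})%:P) ^+ a)%:P).

Lemma sig_coef (C : comNzRingType) a (w : P3 C) i :
  (sig a w)`_i = w`_i * (('X : {poly C})%:P) ^+ (a * i).
Proof.
rewrite /sig coef_comp_poly.
have E k : ('X * ((('X : {poly C})%:P) ^+ a)%:P) ^+ k = 'X^k * ((('X : {poly C})%:P) ^+ (a * k))%:P.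
  by rewrite exprMn -rmorphXn /= -exprM.
case: (ltnP i (size w)) => [lt|ge].
  rewrite (bigD1 (Ordinal lt)) //= E coefMC coefXn eqxx mul1r big1 ?addr0 //.
  move=> k ne; rewrite E coefMC coefXn.
  have -> : (i == k) = false.
    by apply/negbTE; apply: contra ne => /eqP e; apply/eqP; apply: val_inj; rewrite /= e.
  by rewrite mul0r mulr0.
rewrite nth_default // mul0r big1 // => k _.
rewrite E coefMC coefXn.
have -> : (i == k) = false by apply/negbTE; rewrite neq_ltn (leq_trans (ltn_ord k) ge) orbT.
by rewrite mul0r mulr0.
Qed.

Lemma sigD (C : comNzRingType) a (p q : P3 C) : sig a (p + q) = sig a p + sig a q.
Proof. exact: comp_polyD. Qed.
Lemma sigB (C : comNzRingType) a (p q : P3 C) : sig a (p - q) = sig a p - sig a q.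
Proof. exact: comp_polyB. Qed.
Lemma sigM (C : comNzRingType) a (p q : P3 C) : sig a (p * q) = sig a p * sig a q.
Proof. exact: comp_polyM. Qed.
Lemma sigX (C : comNzRingType) a (p : P3 C) n : sig a (p ^+ n) = sig a p ^+ n.
Proof.
elim: n => [|n IH]; first by rewrite !expr0 /sig comp_polyC.
by rewrite !exprS sigM IH.
Qed.
Lemma sig_sum (C : comNzRingType) a (I : finType) (F : I -> P3 C) : sig a (\sum_i F i) = \sum_i sig a (F i).
Proof.
apply: (big_morph (sig a)); first by move=> x y; exact: sigD.
by rewrite /sig comp_poly0.
Qed.
Lemma sig_const (C : comNzRingType) a (c : C) : sig a (pconst c) = pconst c.
Proof. by rewrite /sig /pconst comp_polyC. Qed.
Lemma sig_X3 (C : comNzRingType) a : sig a (pvar C o2) = pvar C o2.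
Proof. by rewrite /sig /pvar /= comp_polyC. Qed.
Lemma sig_X1 (C : comNzRingType) a : sig a (pvar C o0) = 'X * pvar C o2 ^+ a.
Proof. by rewrite /sig /pvar /= comp_polyX rmorphXn. Qed.

Definition Tpol (C : comNzRingType) (S : {poly C}) (a b s : nat) : P3 C :=
  \sum_(k < s.+1) pconst (S`_k) * pvar C o0 ^+ k * pvar C o2 ^+ (b - k * a).
Definition f1pol (C : comNzRingType) (a : nat) : P3 C := pvar C o0 + pvar C o2 ^+ a.

Lemma map_S (C : comNzRingType) (S : {poly C}) s : (size S <= s.+1)%N ->
  map_poly (polyC \o polyC) S = \sum_(k < s.+1) pconst (S`_k) * 'X^k.
Proof.
move=> szS; apply/polyP => i.
rewrite coef_map coef_sum /=.
case: (ltnP i s.+1) => [lt|ge].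
  rewrite (bigD1 (Ordinal lt)) //= /pconst coefCM coefXn eqxx mulr1 big1 ?addr0 //.
  move=> k ne; rewrite coefCM coefXn.
  have -> : (i == k) = false.
    by apply/negbTE; apply: contra ne => /eqP e; apply/eqP; apply: val_inj; rewrite /= e.
  by rewrite mulr0.
rewrite nth_default ?(leq_trans szS) // big1 //= => k _.
rewrite coefCM coefXn.
have -> : (i == k) = false by apply/negbTE; rewrite neq_ltn (leq_trans (ltn_ord k) ge) orbT.
by rewrite mulr0.
Qed.

Lemma Zkey (C : comNzRingType) (S : {poly C}) (a b s a' b' L : nat) i :
  (s * a <= b)%N -> (a * b' = L)%N -> (b * a' = L)%N -> (size S <= s.+1)%N ->
  (Tpol S a b s ^+ a' - f1pol C a ^+ b')`_i * (('X : {poly C})%:P) ^+ (a * i) =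
  (('X : {poly C})%:P) ^+ L * (((S ^+ a' - ('X + 1) ^+ b')`_i)%:P)%:P.
Proof.
move=> sab eL1 eL2 szS.
rewrite -sig_coef sigB !sigX.
have ET : sig a (Tpol S a b s) = pvar C o2 ^+ b * map_poly (polyC \o polyC) S.
  rewrite (map_S szS) mulr_sumr /Tpol sig_sum; apply: eq_bigr => k _.
  rewrite !sigM !sigX sig_const sig_X1 sig_X3 exprMn -exprM.
  have Hk : (a * k + (b - k * a) = b)%N.
    have : (k * a <= b)%N by apply: leq_trans sab; rewrite leq_mul2r -ltnS ltn_ord orbT.
    rewrite mulnC; move=> H; nlia.
  by rewrite -!mulrA -exprD Hk mulrA mulrC.
have EF : sig a (f1pol C a) = pvar C o2 ^+ a * ('X + 1).
  by rewrite /f1pol sigD sigX sig_X1 sig_X3 mulrDr mulr1 mulrC.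
rewrite ET EF !exprMn -!exprM eL2 eL1 -mulrBr.
have -> : map_poly (polyC \o polyC) S ^+ a' - ('X + 1) ^+ b' =
          map_poly (polyC \o polyC) (S ^+ a' - ('X + 1) ^+ b').
  by rewrite rmorphB !rmorphXn rmorphD /= map_polyX rmorph1.
rewrite /pvar /= -rmorphXn coefCM coef_map //.
Qed.

Lemma vpow_neq0 (C : idomainType) n : (('X : {poly C})%:P) ^+ n != 0.
Proof. by rewrite expf_neq0 // polyC_eq0 polyX_eq0. Qed.

Lemma Z_low (C : idomainType) (S : {poly C}) (a b s a' b' L : nat) i :
  (s * a <= b)%N -> (a * b' = L)%N -> (b * a' = L)%N -> (size S <= s.+1)%N ->
  (forall i, (i <= s)%N -> (S ^+ a' - ('X + 1) ^+ b')`_i = 0) ->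
  (i <= s)%N -> (Tpol S a b s ^+ a' - f1pol C a ^+ b')`_i = 0.
Proof.
move=> sab eL1 eL2 szS HE le.
have := Zkey i sab eL1 eL2 szS; rewrite HE // !rmorph0 mulr0 => /eqP.
by rewrite mulf_eq0 (negbTE (vpow_neq0 _ _)) orbF => /eqP.
Qed.

Lemma Z_cb (C : idomainType) (S : {poly C}) (a b s a' b' L : nat) :
  (s * a <= b)%N -> (a * b' = L)%N -> (b * a' = L)%N -> (size S <= s.+1)%N ->
  (forall i, (i <= s)%N -> (S ^+ a' - ('X + 1) ^+ b')`_i = 0) -> (0 < a)%N ->
  cb (Tpol S a b s ^+ a' - f1pol C a ^+ b') (L - (a - 1) * s.+1).
Proof.
move=> sab eL1 eL2 szS HE apos i j k nz.
set Z := (Tpol S a b s ^+ a' - f1pol C a ^+ b').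
have Zi : Z`_i != 0 by apply: contraNneq nz => ->; rewrite !coef0.
have si : (s < i)%N.
  rewrite ltnNge; apply: contra Zi => le; apply/eqP; exact: (Z_low sab eL1 eL2 szS HE le).
have K := Zkey i sab eL1 eL2 szS; rewrite -/Z in K.
have Kj := congr1 (fun q : {poly {poly C}} => q`_j) K.
rewrite /= -!rmorphXn /= coefMC -rmorphM coefC in Kj.
have j0 : j = 0%N.
  apply/eqP; apply/negPn/negP => jn; move: Kj; rewrite (negbTE jn) => /eqP.
  rewrite mulf_eq0 expf_eq0 polyX_eq0 andbF orbF => /eqP Zij.
  by move: nz; rewrite Zij coef0 eqxx.
subst j; rewrite eqxx in Kj.
have Kk := congr1 (fun q : {poly C} => q`_(k + a * i)) Kj.
rewrite /= coefMXn ltnNge leq_addl /= addnK coefMC coefXn in Kk.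
have ekL : (k + a * i = L)%N.
  apply/eqP; apply/negPn/negP => ne; move: Kk; rewrite (negbTE ne) mul0r => Zk.
  by move: nz; rewrite Zk eqxx.
have H1 : ((a - 1) * s.+1 <= (a - 1) * i)%N by rewrite leq_mul2l si orbT.
have H2 : (a * i = (a - 1) * i + i)%N.
  by rewrite mulnBl mul1n subnK // leq_pmull.
nlia.
Qed.

Lemma LM_eq (C : comNzRingType) (p : P3 C) c c' i j k i' j' k' :
  LM p c i j k -> c = c' -> i = i' -> j = j' -> k = k' -> LM p c' i' j' k'.
Proof. by move=> H <- <- <- <-. Qed.

Lemma pconst0 (C : comNzRingType) : pconst (0 : C) = 0.
Proof. by rewrite /pconst !rmorph0. Qed.

Lemma LM_sum (C : comNzRingType) n (F : 'I_n -> P3 C) c i j k :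
  (forall t, LM (F t) c i j k) -> LM (\sum_(t < n) F t) (c *+ n) i j k.
Proof.
elim: n F => [|n IH] F H.
  rewrite big_ord0 mulr0n; exists 0; split; last exact: cb0.
  by rewrite pconst0 mul0r addr0.
rewrite big_ord_recr mulrSr; apply: LM_add => //.
exact: IH.
Qed.

Definition rho (C : comNzRingType) (m : nat) : P3 C :=
  if m == 1%N then 0 else pvar C o2 ^+ m.
Definition f2pol (C : comNzRingType) (S : {poly C}) (a b s m : nat) : P3 C :=
  pvar C o1 + rho C m + Tpol S a b s.

Lemma LM_f1 (C : comNzRingType) a : (2 <= a)%N -> LM (f1pol C a) 1 0 0 a.
Proof.
move=> a2; exists (pvar C o0); split.
  by rewrite /f1pol pconst1 mul1r /mono !expr0 !mul1r addrC.
by apply: cb_mono (@cb_X1 C) _; rewrite !add0n -subn1 leq_subRL // ltnW.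
Qed.

Lemma LM_T (C : comNzRingType) (S : {poly C}) a b s :
  (2 <= a)%N -> (s * a <= b)%N -> S`_0 = 1 -> LM (Tpol S a b s) 1 0 0 b.
Proof.
move=> a2 sab S0; rewrite /Tpol big_ord_recl.
set q := (\sum_(i < s) _).
exists q; split.
  by rewrite /= S0 pconst1 expr0 mulr1 mul0n subn0 /mono !expr0 !mul1r.
apply: cb_sum => t; rewrite !add0n.
have lt : (t < s)%N := ltn_ord t.
have H1 : ((bump 0 t) * a <= b)%N by apply: leq_trans sab; rewrite leq_mul2r /bump /= add1n lt orbT.
have H2 : ((bump 0 t) * 2 <= (bump 0 t) * a)%N by rewrite leq_mul2l a2 orbT.
apply: cb_mono.
  apply: cb_mul; first apply: cb_mul.
  - exact: cb_const.
  - by apply: cb_exp; apply: cb_X1.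
  - by apply: cb_exp; apply: cb_X3.
rewrite /bump leq0n add1n -subn1 !mul1n add0n in H1 H2 *; rewrite lift0; nlia.
Qed.

Lemma LM_delta (C : comNzRingType) m : (1 <= m)%N ->
  LM (pvar C o1 + rho C m) 1 0 (if m == 1%N then 1 else 0) (if m == 1%N then 0 else m).
Proof.
move=> m1; rewrite /rho; case: (eqVneq m 1%N) => [e|ne].
  exists 0; split; last exact: cb0.
  by rewrite addr0 pconst1 mul1r /mono !expr0 mul1r mulr1 expr1 addr0.
exists (pvar C o1); split.
  by rewrite pconst1 mul1r /mono !expr0 !mul1r addrC.
apply: cb_mono (@cb_X2 C) _; rewrite !add0n -subn1 leq_subRL //.
by rewrite ltn_neqAle eq_sym ne m1.
Qed.

Lemma cb_rho (C : comNzRingType) m : cb (rho C m) m.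
Proof.
rewrite /rho; case: eqP => _; first exact: cb0.
by have := @cb_exp C _ _ m (@cb_X3 C); rewrite mul1n.
Qed.

Lemma LM_f2 (C : comNzRingType) (S : {poly C}) a b s m :
  (2 <= a)%N -> (s * a <= b)%N -> S`_0 = 1 -> (1 <= m)%N -> (m < b)%N ->
  LM (f2pol S a b s m) 1 0 0 b.
Proof.
move=> a2 sab S0 m1 mb; rewrite /f2pol addrC; apply: LM_low; first exact: LM_T.
rewrite !add0n; apply: cb_add.
  by apply: cb_mono (@cb_X2 C) _; rewrite -subn1 leq_subRL ?(leq_trans m1 (ltnW mb)) // addn1 (leq_trans _ mb) // ltnS.
by apply: cb_mono (@cb_rho C m) _; rewrite -subn1 leq_subRL ?(leq_trans m1 (ltnW mb)) // addnC addn1.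
Qed.

Lemma pvar_X3_form (C : comNzRingType) : pvar C o2 = pconst 1 * mono C 0 0 1.
Proof. by rewrite pconst1 mul1r /mono !expr0 !mul1r expr1. Qed.

Lemma f3_deg (C : numClosedFieldType) (S : {poly C}) a b s a' b' L m k c :
  (2 <= a)%N -> (s * a <= b)%N -> (a * b' = L)%N -> (b * a' = L)%N -> (size S <= s.+1)%N -> S`_0 = 1 ->
  (forall i, (i <= s)%N -> (S ^+ a' - ('X + 1) ^+ b')`_i = 0) -> (0 < a')%N -> (1 <= m)%N -> (m < b)%N ->
  (L - (a - 1) * s.+1 <= m + b * a'.-1)%N -> c = (m + a * k + b * a'.-1)%N ->
  tdeg (pvar C o2 + (f2pol S a b s m ^+ a' - f1pol C a ^+ b') * f1pol C a ^+ k) = c.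
Proof.
move=> a2 sab eL1 eL2 szS S0 HE a'pos m1 mb HZ ec.
set f1 := f1pol C a; set T := Tpol S a b s; set f2 := f2pol S a b s m.
set J0 := (if m == 1%N then 1 else 0)%N; set K0 := (if m == 1%N then 0 else m)%N.
have eJK : (J0 + K0 = m)%N by rewrite /J0 /K0; case: eqP => [->|]; rewrite ?addn0.
have Ed : f2 - T = pvar C o1 + rho C m by rewrite /f2 /f2pol addrK.
have -> : (f2 ^+ a' - f1 ^+ b') * f1 ^+ k =
          (f2 ^+ a' - T ^+ a') * f1 ^+ k + (T ^+ a' - f1 ^+ b') * f1 ^+ k.
  by rewrite -mulrDl addrA subrK.
set B := (T ^+ a' - f1 ^+ b') * f1 ^+ k.
set A := (f2 ^+ a' - T ^+ a') * f1 ^+ k.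
have EA : A = \sum_(i < a') (((pvar C o1 + rho C m) * f1 ^+ k) * f2 ^+ (a'.-1 - i)) * T ^+ i.
  rewrite /A subrXX Ed mulrAC mulr_sumr; apply: eq_bigr => i _; exact: mulrA.
have posd : (0 < 0 + J0 + K0)%N by rewrite add0n eJK.
have LA : LM A (1 *+ a') 0 J0 (K0 + a * k + b * a'.-1).
  rewrite EA; apply: LM_sum => i.
  have H1 := LM_mulpow k (LM_f1 C a2) (ltnW a2) (LM_delta C m1) posd.
  have pos1 : (0 < 0 + 0 * k + (J0 + 0 * k) + (K0 + a * k))%N by nlia.
  have H2 := LM_mulpow (a'.-1 - i) (LM_f2 a2 sab S0 m1 mb) (leq_trans m1 (ltnW mb)) H1 pos1.
  have pos2 : (0 < 0 + 0 * k + 0 * (a'.-1 - i) + (J0 + 0 * k + 0 * (a'.-1 - i)) +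
     (K0 + a * k + b * (a'.-1 - i)))%N.
    by rewrite !mul0n !addn0 !add0n (leq_trans posd) // add0n leq_add2l -addnA leq_addr.
  have H3 := LM_mulpow i (LM_T a2 sab S0) (leq_trans m1 (ltnW mb)) H2 pos2.
  apply: (LM_eq H3).
  - by rewrite !expr1n !mulr1.
  - by rewrite !mul0n !addn0.
  - by rewrite !mul0n !addn0.
  - have li : (i <= a'.-1)%N by rewrite -ltnS prednK // ltn_ord.
    by rewrite -!addnA -mulnDr subnK.
have degA : (0 + J0 + (K0 + a * k + b * a'.-1))%N = c.
  by rewrite ec -eJK; nlia.
have cbB : cb B c.
  apply: cb_mono; first apply: cb_mul.
  - exact: (Z_cb sab eL1 eL2 szS HE (leq_trans _ a2)).
  - exact: cb_exp (LM_cb (LM_f1 C a2)).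
  by rewrite ec; nlia.
have B0 : B`_0 = 0.
  by rewrite /B coef0M (Z_low sab eL1 eL2 szS HE (leq0n s)) mul0r.
clearbody A B.
have c1 : (1 <= c)%N by rewrite ec -addnA (leq_trans m1 (leq_addr _ _)).
apply: (@tdeg_eq _ _ c 0 J0 (K0 + a * k + b * a'.-1)); last exact: degA.
  apply: cb_add; first exact: cb_mono (@cb_X3 C) c1.
  apply: cb_add => //; rewrite -degA; exact: LM_cb LA.
have cB : B`_0`_J0`_(K0 + a * k + b * a'.-1) = 0 by rewrite B0 coef0 coef0.
have cA : A`_0`_J0`_(K0 + a * k + b * a'.-1) = 1 *+ a' by apply: (LM_coef LA); rewrite degA.
rewrite !coefD cB addr0 cA.
rewrite pvar_X3_form coef_mono /=.
have -> : [&& J0 == 0%N & K0 + a * k + b * a'.-1 == 1%N] = false.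
  case: (eqVneq m 1%N) => [e|ne]; rewrite /J0 /K0.
    by rewrite e.
  rewrite (negbTE ne) /=; apply: negbTE; rewrite neq_ltn; apply/orP; right.
  have m2 : (1 < m)%N by rewrite ltn_neqAle eq_sym ne m1.
  by apply: leq_trans m2 _; apply: leq_trans (leq_addr (a * k) m) (leq_addr _ _).
by rewrite add0r pnatr_eq0 -lt0n.
Qed.
Definition evf (C : comNzRingType) (g : 'I_3 -> P3 C) (p : P3 C) : P3 C := ev g p.
Lemma peval_evf (C : comNzRingType) (p : P3 C) g : peval p g = evf g p.
Proof. exact: peval_ev. Qed.
Lemma evf_add (C : comNzRingType) g (p q : P3 C) : evf g (p + q) = evf g p + evf g q.
Proof. exact: ev_add. Qed.
Lemma evf_sub (C : comNzRingType) g (p q : P3 C) : evf g (p - q) = evf g p - evf g q.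
Proof. exact: ev_sub. Qed.
Lemma evf_mul (C : comNzRingType) g (p q : P3 C) : evf g (p * q) = evf g p * evf g q.
Proof. exact: ev_mul. Qed.
Lemma evf_exp (C : comNzRingType) g (p : P3 C) n : evf g (p ^+ n) = evf g p ^+ n.
Proof. exact: ev_exp. Qed.
Lemma evf_sum (C : comNzRingType) g (I : finType) (F : I -> P3 C) : evf g (\sum_i F i) = \sum_i evf g (F i).
Proof. exact: ev_sum. Qed.
Lemma evf_const (C : comNzRingType) g (c : C) : evf g (pconst c) = pconst c.
Proof. exact: ev_const. Qed.
Lemma evf_X1 (C : comNzRingType) g : evf g (pvar C o0) = g o0.
Proof. exact: ev_X1. Qed.
Lemma evf_X2 (C : comNzRingType) g : evf g (pvar C o1) = g o1.
Proof. exact: ev_X2. Qed.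
Lemma evf_X3 (C : comNzRingType) g : evf g (pvar C o2) = g o2.
Proof. exact: ev_X3. Qed.
Lemma evf0 (C : comNzRingType) g : evf g (0 : P3 C) = 0.
Proof. by rewrite /evf rmorph0. Qed.
Global Opaque evf.

Lemma o01 : (o0 == o1) = false. Proof. by []. Qed.
Lemma o02 : (o0 == o2) = false. Proof. by []. Qed.
Lemma o10 : (o1 == o0) = false. Proof. by []. Qed.
Lemma o12 : (o1 == o2) = false. Proof. by []. Qed.
Lemma o20 : (o2 == o0) = false. Proof. by []. Qed.
Lemma o21 : (o2 == o1) = false. Proof. by []. Qed.

Definition emap (C : comNzRingType) (j : 'I_3) (g : P3 C) : polymap C :=
  fun i => if i == j then pvar C j + g else pvar C i.

Lemma emap_elem (C : comNzRingType) j (g : P3 C) : indep_of j g -> elementary (emap j g).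
Proof.
move=> H; exists j, g; split => //; split; first by rewrite /emap eqxx.
by move=> i ne; rewrite /emap (negbTE ne).
Qed.

Lemma evf_Tpol (C : comNzRingType) g (S : {poly C}) a b s :
  evf g (Tpol S a b s) = \sum_(k < s.+1) pconst (S`_k) * g o0 ^+ k * g o2 ^+ (b - k * a).
Proof.
rewrite /Tpol evf_sum; apply: eq_bigr => k _.
by rewrite !evf_mul !evf_exp evf_const evf_X1 evf_X3.
Qed.

Lemma evf_rho (C : comNzRingType) g m : evf g (rho C m) = if m == 1%N then 0 else g o2 ^+ m.
Proof. by rewrite /rho; case: eqP => _; rewrite ?evf0 // evf_exp evf_X3. Qed.

Lemma construct (C : fieldType) (S : {poly C}) a b s a' b' m k :
  exists F : polymap C, tame F /\ F o0 = f1pol C a /\ F o1 = f2pol S a b s m /\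
    F o2 = pvar C o2 + (f2pol S a b s m ^+ a' - f1pol C a ^+ b') * f1pol C a ^+ k.
Proof.
set E1 := emap o0 (pvar C o2 ^+ a).
set E2 := emap o1 (rho C m + Tpol S a b s).
set E3 := emap o2 ((pvar C o1 ^+ a' - pvar C o0 ^+ b') * pvar C o0 ^+ k).
have G0 : Defs.pcomp E1 E2 o0 = f1pol C a.
  by rewrite /Defs.pcomp /E1 /emap eqxx peval_evf evf_add evf_exp evf_X1 evf_X3 /E2 /emap o01 o21.
have G1 : Defs.pcomp E1 E2 o1 = f2pol S a b s m.
  by rewrite /Defs.pcomp /E1 /emap o10 peval_evf evf_X2 /E2 /emap eqxx /f2pol addrA.
have G2 : Defs.pcomp E1 E2 o2 = pvar C o2.
  by rewrite /Defs.pcomp /E1 /emap o20 peval_evf evf_X3 /E2 /emap o21.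
have TG : tame (Defs.pcomp E1 E2).
  apply: tame_comp; apply: tame_elem.
  + apply: emap_elem; rewrite /indep_of peval_evf evf_exp evf_X3 o20 //.
  + apply: emap_elem; rewrite /indep_of peval_evf evf_add evf_rho evf_Tpol o21 o01 /=.
    by rewrite /rho /Tpol.
set G := Defs.pcomp E1 E2 in G0 G1 G2 TG *; clearbody G.
exists (Defs.pcomp E3 G); split; last split; last split.
- apply: tame_comp => //; apply: tame_elem.
  apply: emap_elem; rewrite /indep_of peval_evf evf_mul evf_sub !evf_exp evf_X1 evf_X2.
    by rewrite o12 o02.
- by rewrite /Defs.pcomp /E3 /emap o02 peval_evf evf_X1 G0.
- by rewrite /Defs.pcomp /E3 /emap o12 peval_evf evf_X2 G1.
- rewrite /Defs.pcomp /E3 /emap eqxx peval_evf evf_add evf_X3 G2 evf_mul evf_sub !evf_exp evf_X1 evf_X2.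
  by rewrite G0 G1.
Qed.

Lemma tdeg_f1 (C : comNzRingType) a : (2 <= a)%N -> tdeg (f1pol C a) = a.
Proof.
move=> a2; have H := LM_f1 C a2.
apply: (@tdeg_eq _ _ a 0 0 a); [exact: LM_cb H | | by rewrite !add0n].
by rewrite (LM_coef H) ?oner_neq0 // ltnW.
Qed.

Lemma tdeg_f2 (C : comNzRingType) (S : {poly C}) a b s m :
  (2 <= a)%N -> (s * a <= b)%N -> S`_0 = 1 -> (1 <= m)%N -> (m < b)%N ->
  tdeg (f2pol S a b s m) = b.
Proof.
move=> a2 sab S0 m1 mb; have H := LM_f2 a2 sab S0 m1 mb.
apply: (@tdeg_eq _ _ b 0 0 b); [exact: LM_cb H | | by rewrite !add0n].
by rewrite (LM_coef H) ?oner_neq0 // (leq_trans m1 (ltnW mb)).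
Qed.

Local Close Scope ring_scope.

Theorem theorem1 (C : numClosedFieldType) (a b c : nat) :
  (2 < a)%N -> (a < b)%N ->
  (lcmn a b - minn (b - 1) ((a - 1) * (b %/ a + 1)) <= c)%N ->
  exists F : polymap C, tame F /\ mdeg F = (a, b, c).
Proof.
move=> a2 ab hc.
have a2' : (2 <= a)%N by apply: ltnW.
have apos : (0 < a)%N by apply: leq_trans a2.
set g := gcdn a b.
have gpos : (0 < g)%N by rewrite gcdn_gt0 apos.
set a' := a %/ g; set b' := b %/ g; set L := lcmn a b; set s := b %/ a.
have ea : (a' * g = a)%N by rewrite divnK // dvdn_gcdl.
have eb : (b' * g = b)%N by rewrite divnK // dvdn_gcdr.
have eLg : (L * g = a * b)%N by rewrite muln_lcm_gcd.
have eL1 : (a * b' = L)%N.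
  apply/eqP; rewrite -(eqn_pmul2r gpos) -mulnA eb eLg //.
have eL2 : (b * a' = L)%N.
  apply/eqP; rewrite -(eqn_pmul2r gpos) -mulnA ea eLg mulnC //.
have a'pos : (0 < a')%N by rewrite divn_gt0 // dvdn_leq // dvdn_gcdl.
have sab : (s * a <= b)%N by apply: leq_divM.
have s1 : (1 <= s)%N by rewrite divn_gt0 // ltnW.
set r := minn (b - 1) ((a - 1) * s.+1).
have hc2 : (L - r <= c)%N by rewrite /r -[s.+1]addn1.
have rb : (r <= b - 1)%N by apply: geq_minl.
have ra : (r <= (a - 1) * s.+1)%N by apply: geq_minr.
have ar : (a <= r)%N.
  rewrite leq_min; apply/andP; split; first by nlia.
  apply: (@leq_trans ((a - 1) * 2)); last by rewrite leq_mul2l ltnS s1 orbT.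
  nlia.
have Lb : (b <= L)%N by rewrite -eL2 leq_pmulr.
have ba : (b * a'.-1 = L - b)%N by rewrite -subn1 mulnBr muln1 eL2.
set e := (c - (L - r))%N.
set k := e %/ a; set rem := e %% a.
have ee : (e = k * a + rem)%N by apply: divn_eq.
have remlt : (rem < a)%N by apply: ltn_pmod.
set m := (b - r + rem)%N.
have m1 : (1 <= m)%N by rewrite /m; nlia.
have mb : (m < b)%N by rewrite /m; nlia.
have HZ : (L - (a - 1) * s.+1 <= m + b * a'.-1)%N by rewrite ba /m; nlia.
have ec : c = (m + a * k + b * a'.-1)%N by rewrite ba /m [(a * k)%N]mulnC; nlia.
have nza : ((a'%:R : C) != 0)%R by rewrite pnatr_eq0 -lt0n.
have P0 : (((('X : {poly C}) + 1) ^+ b')`_0 = 1)%R.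
  by rewrite coef0_exp coefD coefX coef1 add0r expr1n.
have [S [szS S0 HS]] := hensel s nza P0.
have HE : forall i, (i <= s)%N -> ((S ^+ a' - ('X + 1) ^+ b')`_i = 0)%R.
  by move=> i le; rewrite -opprB coefN HS // oppr0.
have [F [TF [F0 [F1 F2]]]] := construct S a b s a' b' m k.
exists F; split => //.
rewrite /mdeg F0 F1 F2 tdeg_f1 // (tdeg_f2 _ _ _ m1 mb) //.
by rewrite (f3_deg a2' sab eL1 eL2 szS S0 HE a'pos m1 mb HZ ec).
Qed.
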